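(* Let $(P,\epsilon)$ be a labeled poset and let $n$ be a non-negative integer such that $\Omega(P,\epsilon;n)\ne0$. If $\Omega(P,-\epsilon;n+r(\epsilon))=\Omega(P,\epsilon;n)$, then $\epsilon$ satisfies the $\lambda$-chain condition.
   Context: $P$ is a finite poset with $p$ elements, $\omega:P\to\{1,\dots,p\}$ a bijection; write $x\prec y$ if $y$ covers $x$, and $\epsilon(x,y)=1$ if $\omega(x)<\omega(y)$, $-1$ otherwise; $-\epsilon$ is defined by $(-\epsilon)(x,y)=-\epsilon(x,y)$ (induced by the labeling $p+1-\omega$). A $(P,\epsilon)$-partition is an order-reversing map $\sigma:P\to\{1,2,\dots\}$ with $\sigma(x)>\sigma(y)$ whenever $x\prec y$ and $\epsilon(x,y)=-1$; $\Omega(P,\epsilon;n)$ is the number of $(P,\epsilon)$-partitions with largest part at most $n$. $r(\epsilon)=\max\sum_{i=1}^\ell\epsilon(x_{i-1},x_i)$ over all maximal chains $x_0\prec\cdots\prec x_\ell$ of $P$. $\epsilon$ satisfies the $\lambda$-chain condition if every $x\in P$ lies on some maximal chain $x_0\prec\cdots\prec x_\ell$ with $\sum_{i=1}^\ell\epsilon(x_{i-1},x_i)=r(\epsilon)$. *)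

(* Defs.v *)
From HB Require Import structures.
From mathcomp Require Import all_boot all_order all_algebra.
Set Implicit Arguments. Unset Strict Implicit. Unset Printing Implicit Defensive.
Import Order.TTheory GRing.Theory Num.Theory.

Section LabeledPoset.
Variables (d : Order.disp_t) (T : finPOrderType d).

Definition covers (x y : T) : bool :=
  ((x < y)%O && [forall z : T, ~~ ((x < z)%O && (z < y)%O)]).

(* epsilon induced by a labeling omega : T -> 'I_#|T| (labels 0..p-1
   instead of 1..p; only comparisons matter) *)
Definition eps (omega : T -> 'I_#|T|) (x y : T) : int :=
  if (omega x < omega y)%N then 1%R else (-1)%R.

Definition neg_eps (e : T -> T -> int) (x y : T) : int := (- e x y)%R.

Definition is_partition (e : T -> T -> int) (sigma : T -> nat) : bool :=
  [forall x, 0 < sigma x]%N &&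
  [forall x, forall y, (x <= y)%O ==> (sigma y <= sigma x)%N] &&
  [forall x, forall y, (covers x y && (e x y == (-1)%R)) ==> (sigma y < sigma x)%N].

(* Omega(P,e;m): number of (P,e)-partitions with largest part at most m
   (m : int; no partitions counted when m < 0) *)
Definition Omega (e : T -> T -> int) (m : int) : nat :=
  #|[set f : {ffun T -> 'I_`|m|%N} |
      ((0 <= m)%R && is_partition e (fun x => (f x).+1))]|.

Definition minimal (x : T) : bool := [forall y : T, ~~ (y < x)%O].
Definition maximal (x : T) : bool := [forall y : T, ~~ (x < y)%O].

Definition maxchain (x0 : T) (s : seq T) : bool :=
  [&& path covers x0 s, minimal x0 & maximal (last x0 s)].

Fixpoint weight (e : T -> T -> int) (x0 : T) (s : seq T) : int :=
  match s with
  | [::] => 0%R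
  | y :: s' => (e x0 y + weight e y s')%R
  end.

Definition is_r (e : T -> T -> int) (r : int) : Prop :=
  (exists x0 s, maxchain x0 s /\ weight e x0 s = r) /\
  (forall x0 s, maxchain x0 s -> (weight e x0 s <= r)%R).

Definition lambda_chain (e : T -> T -> int) (r : int) : Prop :=
  forall x : T, exists x0 s, [/\ maxchain x0 s, x \in x0 :: s & weight e x0 s = r].

End LabeledPoset.

(* Main.v *)
Require Import Defs.
From mathcomp Require Import all_boot all_order all_algebra zify.
From Stdlib Require Import Classical.
Set Implicit Arguments. Unset Strict Implicit. Unset Printing Implicit Defensive.
Import Order.TTheory GRing.Theory Num.Theory.

Section Aux.
Variables (d : Order.disp_t) (T : finPOrderType d).
Local Open Scope order_scope.

Lemma covers_lt (x y : T) : covers x y -> x < y.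
Proof. by case/andP. Qed.

Lemma cover_below (x y : T) : x < y -> exists z, x <= z /\ covers z y.
Proof.
move=> xy.
suff H : forall n (x : T), (#|[set w : T | (x < w)%O && (w < y)%O]| <= n)%N -> x < y ->
   exists z, x <= z /\ covers z y by exact: (H _ x (leqnn _) xy).
elim=> [|n IH] {xy} x.
  move=> hc xy; exists x; split => //; rewrite /covers xy /=.
  apply/forallP => z; apply/negP => hz.
  have : z \in [set w : T | (x < w) && (w < y)] by rewrite inE.
  by move: hc; rewrite leqn0 => /eqP/cards0_eq ->; rewrite inE.
move=> hc xy.
case: (boolP (covers x y)) => hcov; first by exists x; split.
move: hcov; rewrite /covers xy /= => /forallPn [w]; rewrite negbK => /andP [xw wy].
have [z [wz zc]] : exists z, w <= z /\ covers z y.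
  apply: (IH w) => //.
  have : [set v : T | (w < v) && (v < y)] \proper [set w : T | (x < w) && (w < y)].
    apply/properP; split.
      by apply/subsetP => v; rewrite !inE => /andP [wv ->]; rewrite (lt_trans xw wv).
    by exists w; rewrite !inE ?xw ?wy // ltxx.
  move/proper_card => H; rewrite -ltnS; exact: (leq_trans H hc).
by exists z; split => //; apply: le_trans (ltW xw) wz.
Qed.

Lemma cover_above (x y : T) : x < y -> exists z, covers x z /\ z <= y.
Proof.
move=> xy.
suff H : forall n (y : T), (#|[set w : T | (x < w)%O && (w < y)%O]| <= n)%N -> x < y ->
   exists z, covers x z /\ z <= y by exact: (H _ y (leqnn _) xy).
elim=> [|n IH] {xy} y.
  move=> hc xy; exists y; split => //; rewrite /covers xy /=.
  apply/forallP => z; apply/negP => hz.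
  have : z \in [set w : T | (x < w) && (w < y)] by rewrite inE.
  by move: hc; rewrite leqn0 => /eqP/cards0_eq ->; rewrite inE.
move=> hc xy.
case: (boolP (covers x y)) => hcov; first by exists y; split.
move: hcov; rewrite /covers xy /= => /forallPn [w]; rewrite negbK => /andP [xw wy].
have [z [zc wz]] : exists z, covers x z /\ z <= w.
  apply: (IH w) => //.
  have : [set v : T | (x < v) && (v < w)] \proper [set w : T | (x < w) && (w < y)].
    apply/properP; split.
      by apply/subsetP => v; rewrite !inE => /andP [-> vw]; rewrite (lt_trans vw wy).
    by exists w; rewrite !inE ?xw ?wy // ltxx andbF.
  move/proper_card => H; rewrite -ltnS; exact: (leq_trans H hc).
by exists z; split => //; apply: le_trans wz (ltW wy).
Qed.

Lemma covers_ind (R : T -> T -> Prop) :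
  (forall x, R x x) -> (forall x y z, R x y -> R y z -> R x z) ->
  (forall x y, covers x y -> R x y) -> forall x y, x <= y -> R x y.
Proof.
move=> Rr Rt Rc x y.
suff H : forall n (y : T), (#|[set w : T | (w < y)%O]| <= n)%N -> x <= y -> R x y
  by exact: H _ y (leqnn _).
elim=> [|n IH] {}y hc; rewrite le_eqVlt => /orP [/eqP <- //|xy].
  have : x \in [set w : T | w < y] by rewrite inE.
  by move: hc; rewrite leqn0 => /eqP/cards0_eq ->; rewrite inE.
have [z [xz zy]] := cover_below xy.
apply: (Rt _ z); last exact: Rc.
apply: IH xz.
have : [set v : T | v < z] \proper [set w : T | w < y].
  apply/properP; split.
    by apply/subsetP => v; rewrite !inE => vz; rewrite (lt_trans vz (covers_lt zy)).
  by exists z; rewrite !inE ?ltxx ?(covers_lt zy).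
move/proper_card => H; rewrite -ltnS; exact: (leq_trans H hc).
Qed.

Lemma chain_between (x y : T) : x <= y -> exists s, path (@covers _ T) x s /\ last x s = y.
Proof.
apply: (@covers_ind (fun x y => exists s, path (@covers _ T) x s /\ last x s = y)).
- by move=> z; exists [::].
- move=> a b c [s1 [p1 l1]] [s2 [p2 l2]]; exists (s1 ++ s2).
  by rewrite cat_path last_cat p1 l1 p2 l2.
- by move=> a b ab; exists [:: b]; rewrite /= ab.
Qed.

Lemma minimal_below (x : T) : exists m, minimal m /\ m <= x.
Proof.
suff H : forall n (x : T), (#|[set w : T | (w < x)%O]| <= n)%N -> exists m, minimal m /\ m <= x
  by exact: H _ x (leqnn _).
elim=> [|n IH] {}x hc.
  exists x; split => //; apply/forallP => w; apply/negP => wx.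
  have : w \in [set w : T | w < x] by rewrite inE.
  by move: hc; rewrite leqn0 => /eqP/cards0_eq ->; rewrite inE.
case: (boolP (minimal x)) => hm; first by exists x.
move: hm => /forallPn [w]; rewrite negbK => wx.
have [m [mm mw]] : exists m, minimal m /\ m <= w.
  apply: IH.
  have : [set v : T | v < w] \proper [set w : T | w < x].
    apply/properP; split.
      by apply/subsetP => v; rewrite !inE => vz; rewrite (lt_trans vz wx).
    by exists w; rewrite !inE ?ltxx ?wx.
  move/proper_card => H; rewrite -ltnS; exact: (leq_trans H hc).
by exists m; split => //; apply: le_trans mw (ltW wx).
Qed.

Lemma maximal_above (x : T) : exists m, maximal m /\ x <= m.
Proof.
suff H : forall n (x : T), (#|[set w : T | (x < w)%O]| <= n)%N -> exists m, maximal m /\ x <= m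
  by exact: H _ x (leqnn _).
elim=> [|n IH] {}x hc.
  exists x; split => //; apply/forallP => w; apply/negP => wx.
  have : w \in [set w : T | x < w] by rewrite inE.
  by move: hc; rewrite leqn0 => /eqP/cards0_eq ->; rewrite inE.
case: (boolP (maximal x)) => hm; first by exists x.
move: hm => /forallPn [w]; rewrite negbK => wx.
have [m [mm mw]] : exists m, maximal m /\ w <= m.
  apply: IH.
  have : [set v : T | w < v] \proper [set w : T | x < w].
    apply/properP; split.
      by apply/subsetP => v; rewrite !inE => vz; rewrite (lt_trans wx vz).
    by exists w; rewrite !inE ?ltxx ?wx.
  move/proper_card => H; rewrite -ltnS; exact: (leq_trans H hc).
by exists m; split => //; apply: le_trans (ltW wx) mw.
Qed.

Lemma path_size (x : T) s : path (@covers _ T) x s -> (size s < #|T|)%N.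
Proof.
move=> p.
have : sorted <%O (x :: s) by apply: sub_path p => a b /covers_lt.
move/lt_sorted_uniq/card_uniqP => H.
by rewrite -ltnS -[(size s).+1]/(size (x :: s)) -H ltnS max_card.
Qed.

End Aux.

Lemma int_max (P : int -> Prop) (b : int) :
  (exists k, P k) -> (forall k, P k -> (k <= b)%R) ->
  exists m, P m /\ forall k, P k -> (k <= m)%R.
Proof.
move=> [k0 Pk0] hb.
suff H : forall n : nat, forall k, P k -> (`|b - k|%N <= n)%N ->
   exists m, P m /\ forall k, P k -> (k <= m)%R.
  exact: (H _ k0 Pk0 (leqnn _)).
elim=> [|n IH] k Pk hn.
  exists k; split => // j Pj; have := hb _ Pj; have := hb _ Pk; lia.
case: (classic (exists j, P j /\ (k < j)%R)) => [[j [Pj kj]]|nj].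
  apply: (IH j Pj); have := hb _ Pj; have := hb _ Pk; lia.
exists k; split => // j Pj; case: (lerP j k) => // kj.
by exfalso; apply: nj; exists j.
Qed.

Section Aux2.
Variables (d : Order.disp_t) (T : finPOrderType d).
Variable e : T -> T -> int.

Lemma weight_cat x0 s1 s2 :
  weight e x0 (s1 ++ s2) = (weight e x0 s1 + weight e (last x0 s1) s2)%R.
Proof.
elim: s1 x0 => [|y s1 IH] x0 /=; first by rewrite add0r.
by rewrite IH addrA.
Qed.

Lemma weight_rcons x0 s y :
  weight e x0 (rcons s y) = (weight e x0 s + e (last x0 s) y)%R.
Proof. by rewrite -cats1 weight_cat /= addr0. Qed.

Hypothesis he : forall x y, (e x y <= 1)%R.

Lemma weight_size x0 s : (weight e x0 s <= (size s)%:Z)%R.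
Proof.
elim: s x0 => [|y s IH] x0 //=.
have := he x0 y; have := IH y; lia.
Qed.

Definition DC (x : T) (w : int) := exists x0 s,
  [/\ path (@covers _ T) x0 s, minimal x0, last x0 s = x & weight e x0 s = w].
Definition UC (x : T) (w : int) := exists s,
  [/\ path (@covers _ T) x s, maximal (last x s) & weight e x s = w].

Lemma h_exists : exists h : T -> int, forall x, DC x (h x) /\ forall w, DC x w -> (w <= h x)%R.
Proof.
apply: (@fin_all_exists T (fun _ => int) (fun x hx => DC x hx /\ forall w, DC x w -> (w <= hx)%R)) => x.
apply: (int_max (b := #|T|%:Z)).
  have [m [mm mx]] := minimal_below x.
  have [s [p l]] := chain_between mx.
  by exists (weight e m s), m, s.
move=> w [x0 [s [p _ _ <-]]].
have := weight_size x0 s; have := path_size p; lia.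
Qed.

Lemma g_exists : exists g : T -> int, forall x, UC x (g x) /\ forall w, UC x w -> (w <= g x)%R.
Proof.
apply: (@fin_all_exists T (fun _ => int) (fun x hx => UC x hx /\ forall w, UC x w -> (w <= hx)%R)) => x.
apply: (int_max (b := #|T|%:Z)).
  have [m [mm mx]] := maximal_above x.
  have [s [p l]] := chain_between mx.
  by exists (weight e x s), s; rewrite l.
move=> w [s [p _ <-]].
have := weight_size x s; have := path_size p; lia.
Qed.

End Aux2.

Section Gen.
Variables (d : Order.disp_t) (T : finPOrderType d).
Variable e : T -> T -> int.
Hypothesis heV : forall x y, e x y = 1%R \/ e x y = (-1)%R.
Variables (n : nat) (r : int) (k : T -> int).
Hypothesis K1 : forall x y, covers x y -> (k y + e x y <= k x)%R.
Hypothesis K2 : forall m, maximal m -> (0 <= k m)%R.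
Hypothesis K3 : forall m, minimal m -> (k m <= r)%R.
Variable a : {ffun T -> 'I_n}.
Hypothesis aP : is_partition e (fun x => (a x).+1).

Let tau x : int := ((a x)%:Z + 1 + k x)%R.

Lemma tau_cov x y : covers x y -> (tau y <= tau x)%R /\ (e x y = 1%R -> (tau y < tau x)%R).
Proof.
move=> cxy; move: aP => /andP [/andP [_ P2] P3].
have := K1 cxy.
have le1 : (a y <= a x)%N.
  by have := implyP (forallP (forallP P2 x) y) (ltW (covers_lt cxy)).
rewrite /tau; case: (heV x y) => E; rewrite E.
  split; [lia|]; lia.
have lt1 : (a y < a x)%N.
  have := implyP (forallP (forallP P3 x) y); rewrite cxy E eqxx.
  by move/(_ isT).
split; [lia | move=> HH; lia].
Qed.

Lemma tau_le x y : (x <= y)%O -> (tau y <= tau x)%R.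
Proof.
apply: (@covers_ind _ T (fun x y => (tau y <= tau x)%R)) => //.
- move=> u v w; lia.
- by move=> u v /tau_cov [].
Qed.

Lemma tau_bounds x : (1 <= tau x)%R /\ (tau x <= n%:Z + r)%R.
Proof.
have [M [MM xM]] := maximal_above x.
have [m [mm mx]] := minimal_below x.
have := tau_le xM; have := tau_le mx; have := K2 MM; have := K3 mm.
rewrite /tau; have := ltn_ord (a m); lia.
Qed.

Lemma tau_part (N' : nat) (hN : `|(n%:Z + r)%R|%N = N'.+1) (hnr : (0 <= n%:Z + r)%R) :
  [ffun x => (inord `|((a x)%:Z + k x)%R|%N : 'I_N'.+1)] \in
  [set f : {ffun T -> 'I_N'.+1} | (0 <= n%:Z + r)%R && is_partition (neg_eps e) (fun x => (f x).+1)].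
Proof.
set F := [ffun x => _].
have hv : forall x, ((F x).+1 : int) = tau x.
  move=> x; rewrite ffunE inordK; have := tau_bounds x; rewrite /tau; lia.
rewrite inE hnr /=; apply/andP; split; first (apply/andP; split).
- by apply/forallP.
- apply/forallP => x; apply/forallP => y; apply/implyP => xy.
  have := tau_le xy; rewrite -!hv /=; lia.
- apply/forallP => x; apply/forallP => y; apply/implyP => /andP [cxy /eqP].
  rewrite /neg_eps => E.
  have E1 : e x y = 1%R by case: (heV x y) => E2 //; move: E; rewrite E2.
  have := (tau_cov cxy).2 E1; rewrite -!hv /=; lia.
Qed.

End Gen.

Lemma count_contra (aT bT : finType) (A : {set aT}) (B : {set bT}) (f1 f2 : aT -> bT) :
  {in A &, injective f1} -> (forall a, a \in A -> f1 a \in B) ->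
  (forall a, a \in A -> f2 a \in B) -> (#|B| <= #|A|)%N ->
  forall a, a \in A -> exists2 a', a' \in A & f1 a' = f2 a.
Proof.
move=> inj h1 h2 hc a aA.
have sub : f1 @: A \subset B by apply/subsetP => b /imsetP [a' a'A ->]; exact: h1.
have ci : #|f1 @: A| = #|A| by rewrite card_in_imset.
have eqc : #|f1 @: A| = #|B|.
  apply/eqP; rewrite eqn_leq subset_leq_card // ci //.
have /subset_cardP := eqc => /(_ sub) E.
have : f2 a \in f1 @: A by rewrite E; exact: h2.
by case/imsetP => a' a'A ->; exists a'.
Qed.

Lemma inord_abs (N' : nat) (u : nat) (k M : int) : (1 <= u%:Z + 1 + k)%R ->
  (u%:Z + 1 + k <= M)%R -> `|M|%N = N'.+1 ->
  ((inord `|(u%:Z + k)%R|%N : 'I_N'.+1) : int) = (u%:Z + k)%R.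
Proof. move=> b1 b2 hM; rewrite inordK; lia. Qed.

Theorem lemma7p2 (d : Order.disp_t) (T : finPOrderType d)
  (omega : T -> 'I_#|T|) (omega_bij : bijective omega)
  (n : nat) (r : int) (hr : is_r (eps omega) r)
  (hnz : Omega (eps omega) n%:Z <> 0%N)
  (heq : Omega (neg_eps (eps omega)) (n%:Z + r)%R = Omega (eps omega) n%:Z) :
  lambda_chain (eps omega) r.
Proof.
set e := eps omega in hr hnz heq *.
have heV : forall x y, e x y = 1%R \/ e x y = (-1)%R.
  by move=> x y; rewrite /e /eps; case: ifP; [left|right].
have he1 : forall x y, (e x y <= 1)%R by move=> x y; case: (heV x y) => ->.
have [h hh] := h_exists he1.
have [g hg] := g_exists he1.
case: hr => _ hrle.
have H1 : forall x y, covers x y -> (h x + e x y <= h y)%R.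
  move=> x y cxy; have [[x0 [s [p mn l w]]] _] := hh x.
  apply: (hh y).2; exists x0, (rcons s y); split => //.
  - by rewrite rcons_path p l cxy.
  - by rewrite last_rcons.
  - by rewrite weight_rcons l w.
have H2 : forall m, minimal m -> (0 <= h m)%R.
  by move=> m mm; apply: (hh m).2; exists m, [::]; split.
have H3 : forall m, maximal m -> (h m <= r)%R.
  move=> m mm; have [[x0 [s [p mn l w]]] _] := hh m.
  by rewrite -w; apply: hrle; rewrite /maxchain p mn l mm.
have G1 : forall x y, covers x y -> (g y + e x y <= g x)%R.
  move=> x y cxy; have [[s [p mx w]] _] := hg y.
  apply: (hg x).2; exists (y :: s); split => //=.
  - by rewrite cxy p.
  - by rewrite w addrC.
have G2 : forall m, maximal m -> (0 <= g m)%R.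
  by move=> m mm; apply: (hg m).2; exists [::]; split.
have G3 : forall m, minimal m -> (g m <= r)%R.
  move=> m mm; have [[s [p mx w]] _] := hg m.
  by rewrite -w; apply: hrle; rewrite /maxchain p mm mx.
have GH : forall x, (g x + h x <= r)%R /\
   ((g x + h x)%R = r -> exists x0 s, [/\ maxchain x0 s, x \in x0 :: s & weight e x0 s = r]).
  move=> x; have [[x0 [s [p mn l w]]] _] := hh x; have [[s' [p' mx w']] _] := hg x.
  have mc : maxchain x0 (s ++ s') by rewrite /maxchain cat_path p l p' mn last_cat l mx.
  have wt : weight e x0 (s ++ s') = (g x + h x)%R by rewrite weight_cat l w w' addrC.
  split; first by rewrite -wt; exact: hrle.
  move=> E; exists x0, (s ++ s'); split => //; last by rewrite wt.
  by rewrite -cat_cons mem_cat -l mem_last.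
apply: NNPP => nl.
have [xb hxb] := not_all_ex_not _ _ nl.
have gb : (g xb + h xb < r)%R.
  have [le1 h2] := GH xb; rewrite lt_neqAle le1 andbT; apply/eqP => E.
  by apply: hxb; exact: h2.
set Aset := [set f : {ffun T -> 'I_n} | (0 <= n%:Z)%R && is_partition e (fun x => (f x).+1)].
have OA : Omega e n%:Z = #|Aset| by [].
have [a0 a0A] : exists a, a \in Aset.
  have : (0 < #|Aset|)%N by rewrite -OA lt0n; apply/eqP.
  by rewrite card_gt0 => /set0Pn.
pose k1 := fun x => (r - h x)%R.
have K11 : forall x y, covers x y -> (k1 y + e x y <= k1 x)%R.
  by move=> x y /H1; rewrite /k1; lia.
have K12 : forall m, maximal m -> (0 <= k1 m)%R by move=> m /H3; rewrite /k1; lia.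
have K13 : forall m, minimal m -> (k1 m <= r)%R by move=> m /H2; rewrite /k1; lia.
have aP : forall a, a \in Aset -> is_partition e (fun x => (a x).+1).
  by move=> a; rewrite inE => /andP [].
have hnr : (1 <= n%:Z + r)%R.
  have := (tau_bounds heV K11 K12 K13 (aP _ a0A) xb); lia.
have [N' hN] : exists N', `|(n%:Z + r)%R|%N = N'.+1 by exists (`|(n%:Z + r)%R|.-1); lia.
set Bset := [set f : {ffun T -> 'I_N'.+1} | (0 <= n%:Z + r)%R && is_partition (neg_eps e) (fun x => (f x).+1)].
have OB : Omega (neg_eps e) (n%:Z + r)%R = #|Bset| by rewrite /Omega hN.
pose f1 := fun a : {ffun T -> 'I_n} => [ffun x => (inord `|((a x)%:Z + k1 x)%R|%N : 'I_N'.+1)].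
pose f2 := fun a : {ffun T -> 'I_n} => [ffun x => (inord `|((a x)%:Z + g x)%R|%N : 'I_N'.+1)].
have hnr0 : (0 <= n%:Z + r)%R by lia.
have f1B : forall a, a \in Aset -> f1 a \in Bset.
  by move=> a aA; apply: (tau_part heV K11 K12 K13 (aP _ aA) hN hnr0).
have f2B : forall a, a \in Aset -> f2 a \in Bset.
  by move=> a aA; apply: (tau_part heV G1 G2 G3 (aP _ aA) hN hnr0).
have v1 : forall a, a \in Aset -> forall x, (f1 a x : int) = ((a x)%:Z + k1 x)%R.
  move=> a aA x; rewrite ffunE; have [b1 b2] := tau_bounds heV K11 K12 K13 (aP _ aA) x.
  exact: inord_abs b1 b2 hN.
have v2 : forall a, a \in Aset -> forall x, (f2 a x : int) = ((a x)%:Z + g x)%R.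
  move=> a aA x; rewrite ffunE; have [b1 b2] := tau_bounds heV G1 G2 G3 (aP _ aA) x.
  exact: inord_abs b1 b2 hN.
have inj : {in Aset &, injective f1}.
  move=> a b aA bA E; apply/ffunP => x; apply/val_inj => /=.
  have E1 : ((a x)%:Z + k1 x = (b x)%:Z + k1 x)%R by rewrite -v1 // -v1 // E.
  by move/addIr: E1 => [H]; exact: H.
have hc : (#|Bset| <= #|Aset|)%N by rewrite -OA -OB heq.
have step := count_contra inj f1B f2B hc.
suff : forall K : nat, forall a, a \in Aset -> (\sum_x (a x : nat) <= K)%N -> False.
  by move=> /(_ _ a0 a0A (leqnn _)).
elim=> [|K IH] a aA hK; have [a' a'A E] := step a aA;
  (have le : forall x, (a' x <= a x)%N by
      move=> x; have := v1 a' a'A x; have := v2 a aA x; rewrite E; have := (GH x).1; rewrite /k1; lia);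
  (have lt : (a' xb < a xb)%N by
      have := v1 a' a'A xb; have := v2 a aA xb; rewrite E; rewrite /k1; lia);
  (have hs : (\sum_x (a' x : nat) < \sum_x (a x : nat))%N by
     rewrite (bigD1 xb) //= [X in (_ < X)%N](bigD1 xb) //= -addSn;
     apply: leq_add => //; apply: leq_sum => x _; exact: le x).
  lia.
by apply: (IH a' a'A); lia.
Qed.
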